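(* Let $N\ge 2$, $\lambda\neq 0$, and for $x,p\in\mathbb{C}^N$ set $$L_k(x,p;\lambda)=\begin{pmatrix}1+\lambda p_k & -\lambda^2e^{x_k}\\ e^{-x_k} & 0\end{pmatrix},\qquad T_N(x,p;\lambda)=L_N(x,p;\lambda)\cdots L_2(x,p;\lambda)L_1(x,p;\lambda).$$ (a) Periodic case: if $\widetilde{x}\in\mathbb{C}^N$ satisfies $p_k=\frac{1}{\lambda}\big(e^{\widetilde{x}_k-x_k}-1\big)+\lambda e^{x_k-\widetilde{x}_{k-1}}$ for $k=1,\dots,N$ with $\widetilde x_0=\widetilde x_N$, then $\prod_{k=1}^Ne^{\widetilde{x}_k-x_k}$ is an eigenvalue of $T_N(x,p;\lambda)$. (b) Open-end case: if $\widetilde{x}\in\mathbb{C}^N$ satisfies $p_1=\frac{1}{\lambda}\big(e^{\widetilde{x}_1-x_1}-1\big)$ and $p_k=\frac{1}{\lambda}\big(e^{\widetilde{x}_k-x_k}-1\big)+\lambda e^{x_k-\widetilde{x}_{k-1}}$ for $k=2,\dots,N$, then $\prod_{k=1}^Ne^{\widetilde{x}_k-x_k}$ equals the $(1,1)$-entry of $T_N(x,p;\lambda)$.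
   Context: The relation between $(x,p)$ and $\widetilde x$ is the first half of the Bäcklund transformation $F_\lambda$ of the Toda lattice $\ddot x_k=e^{x_{k+1}-x_k}-e^{x_k-x_{k-1}}$ (periodic, resp. open-end boundary conditions). *)

(* Defs.v *)
From HB Require Import structures.
From mathcomp Require Import all_boot all_order all_algebra.
From mathcomp Require Import complex.
From mathcomp Require Import reals sequences exp trigo.
Set Implicit Arguments. Unset Strict Implicit. Unset Printing Implicit Defensive.
Import Order.TTheory GRing.Theory Num.Theory.
Local Open Scope ring_scope.
Local Open Scope complex_scope.

Definition cexp (R : realType) (z : R[i]) : R[i] :=
  (expR (complex.Re z) * cos (complex.Im z)) +i* (expR (complex.Re z) * sin (complex.Im z)).

(* Lax matrix L_k(x,p;lambda); sequences indexed by nat, entries 1..N used *)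
Definition Lmat (R : realType) (x p : nat -> R[i]) (lam : R[i]) (k : nat)
  : 'M[R[i]]_2 :=
  \matrix_(i < 2, j < 2)
    if i == ord0 then (if j == ord0 then 1 + lam * p k else - lam ^+ 2 * cexp (x k))
    else (if j == ord0 then cexp (- x k) else 0).

Definition Tmat (R : realType) (N : nat) (x p : nat -> R[i]) (lam : R[i])
  : 'M[R[i]]_2 :=
  \prod_(i < N) Lmat x p lam (N - i).

(* Main.v *)
Require Import Defs.
From HB Require Import structures.
From mathcomp Require Import all_boot all_order all_algebra.
From mathcomp Require Import complex.
From mathcomp Require Import reals sequences exp trigo.
From mathcomp Require Import ring.
Import Order.TTheory GRing.Theory Num.Theory.
Local Open Scope ring_scope.
Local Open Scope complex_scope.

Section S.
Variable R : realType.

Lemma cexpD (a b : R[i]) : cexp (a + b) = cexp a * cexp b.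
Proof.
case: a => a1 a2; case: b => b1 b2.
rewrite /cexp /= expRD cosD sinD.
apply/eqP; rewrite eq_complex /=; apply/andP; split; apply/eqP; ring.
Qed.

Lemma cexp0 : cexp (0 : R[i]) = 1.
Proof.
rewrite /cexp /= expR0 cos0 sin0 mulr1 mulr0 //.
Qed.

Lemma cexpN (a : R[i]) : cexp (- a) * cexp a = 1.
Proof. by rewrite -cexpD addNr cexp0. Qed.

Lemma eig_tr n (A : 'M[R[i]]_n) a : eigenvalue A^T a = eigenvalue A a.
Proof.
rewrite /eigenvalue /eigenspace -!mxrank_eq0 !mxrank_ker.
have -> : A^T - a%:M = (A - a%:M)^T by rewrite linearB /= tr_scalar_mx.
by rewrite mxrank_tr.
Qed.

Definition vv (c : R[i]) : 'cV[R[i]]_2 := \col_i (if i == ord0 then 1 else c).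

Lemma chain (Lf : nat -> 'M[R[i]]_2) (a : nat -> R[i]) (w : nat -> 'cV[R[i]]_2) n :
  (forall k, (1 <= k <= n)%N -> Lf k *m w k.-1 = a k *: w k) ->
  (\prod_(i < n) Lf (n - i)%N) *m w 0%N = (\prod_(1 <= k < n.+1) a k) *: w n.
Proof.
elim: n => [|n IH] H.
  by rewrite big_ord0 big_geq // mul1mx scale1r.
rewrite big_ord_recl big_nat_recr //= -mulmxE -mulmxA subn0.
have -> : \prod_(i < n) Lf (n.+1 - bump 0 i)%N = \prod_(i < n) Lf (n - i)%N by [].
rewrite IH; last by move=> k /andP[h1 h2]; apply: H; rewrite h1 ltnW.
by rewrite -scalemxAr H ?leqnn // scalerA mulrC.
Qed.

Lemma step (x p xt : nat -> R[i]) lam k c :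
  lam != 0 ->
  p k = lam^-1 * (cexp (xt k - x k) - 1) + lam * cexp (x k) * c ->
  Lmat x p lam k *m vv c = cexp (xt k - x k) *: vv (cexp (- xt k)).
Proof.
move=> hl hp; apply/matrixP => i j.
rewrite !mxE big_ord_recl big_ord1 !mxE /=.
have hx := cexpN (x k); have ht := cexpN (xt k).
case: i => [[|[|//]]] hi /=.
- rewrite hp mulrDr mulrA mulrA divff // mul1r; ring.
- rewrite mul0r addr0 mulr1 [xt k - x k]addrC cexpD -mulrA [cexp (xt k) * _]mulrC ht mulr1 //.
Qed.
End S.
Theorem theorem3 (R : realType) (N : nat) (lam : R[i]) (x p xt : nat -> R[i]) :
  (2 <= N)%N -> lam != 0 ->
  (* (a) periodic case, with convention xt_0 = xt_N *)
  ((xt 0%N = xt N) ->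
   (forall k : nat, (1 <= k <= N)%N ->
      p k = lam^-1 * (cexp (xt k - x k) - 1) + lam * cexp (x k - xt k.-1)) ->
   eigenvalue (Tmat N x p lam) (\prod_(1 <= k < N.+1) cexp (xt k - x k)))
  /\
  (* (b) open-end case *)
  (p 1%N = lam^-1 * (cexp (xt 1%N - x 1%N) - 1) ->
   (forall k : nat, (2 <= k <= N)%N ->
      p k = lam^-1 * (cexp (xt k - x k) - 1) + lam * cexp (x k - xt k.-1)) ->
   \prod_(1 <= k < N.+1) cexp (xt k - x k) = Tmat N x p lam ord0 ord0).
Proof.
move=> hN hl; split.
- move=> h0 hp.
  set w := fun k => @vv R (cexp (R:=R) (- xt k)).
  have H := @chain R (Lmat x p lam) (fun k => cexp (xt k - x k)) w N.
  rewrite /Tmat; set T := \prod_(i < N) _ in H *.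
  set s := \prod_(1 <= k < N.+1) _ in H *.
  have {}H : T *m w N = s *: w N.
    have E : w 0%N = w N by rewrite /w h0.
    rewrite -[in T *m _]E; apply: H => k hk.
    apply: step => //; rewrite hp // [cexp (x k - _)]cexpD mulrA //.
  rewrite -eig_tr; apply/eigenvalueP; exists (w N)^T.
    by rewrite -trmx_mul H linearZ.
  apply/eqP => /matrixP /(_ ord0 ord0); rewrite !mxE /=.
  by move/eqP; rewrite oner_eq0.
- move=> h1 hp.
  set w := fun k : nat => if k == 0%N then @vv R 0 else @vv R (cexp (R:=R) (- xt k)).
  have H := @chain R (Lmat x p lam) (fun k => cexp (xt k - x k)) w N.
  rewrite /Tmat; set T := \prod_(i < N) _ in H *.
  set s := \prod_(1 <= k < N.+1) _ in H *.
  have {}H : T *m w 0%N = s *: w N.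
    apply: H => k /andP[hk1 hk2].
    rewrite /w; case: k hk1 hk2 => [//|[|k]] _ hk2 /=.
      by apply: step => //; rewrite h1 mulr0 addr0.
    by apply: step => //; rewrite hp // [cexp (x _ - _)]cexpD mulrA.
  move/matrixP: H => /(_ ord0 ord0).
  rewrite !mxE big_ord_recl big_ord1 !mxE /= mulr1 mulr0 addr0.
  by rewrite /w; case: eqP => [E|_]; [move: hN; rewrite E | rewrite mxE /= mulr1 => <-].
Qed.
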